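(* Let $k$ be a field and $\mathsf{E}$ a locally finite $k$-linear category, and let $\mathsf{E}^\sim$ be its subcategory of short morphisms. Then the contramodule forgetful functor $\Theta_{\mathsf{E}^\sim}$ from left $\mathcal{C}_{\mathsf{E}^\sim}$-contramodules to left $\mathsf{E}^\sim$-modules is an equivalence of categories.
   Context: A small $k$-linear category $\mathsf{E}$ has $k$-vector spaces $\operatorname{Hom}_\mathsf{E}(x,y)$, $k$-bilinear associative composition and identities with $\mathrm{id}_x\ne0$. A left module is a $k$-linear functor to $k\text{-Vect}$. Write $x\preceq y$ if there are $n\ge1$ and objects $x=z_0,\dots,z_n=y$ with $\operatorname{Hom}_\mathsf{E}(z_{i-1},z_i)\neq0$ for all $i$; $x\sim y$ if $x\preceq y$ and $y\preceq x$. $\mathsf{E}$ is locally finite if all Hom spaces are finite-dimensional and every $\{z:x\preceq z\preceq y\}$ is finite. $\mathsf{E}^\sim$ has the same objects, $\operatorname{Hom}_{\mathsf{E}^\sim}(x,y)=\operatorname{Hom}_\mathsf{E}(x,y)$ if $x\sim y$ and $0$ otherwise, with the composition of $\mathsf{E}$; it is again a locally finite $k$-linear category. For a locally finite $k$-linear category $\mathsf{F}$: $\mathcal{C}_\mathsf{F}=\bigoplus_{x,y}\mathcal{C}^{x,y}$, $\mathcal{C}^{x,y}=\operatorname{Hom}_\mathsf{F}(x,y)^*$; counit zero on $\mathcal{C}^{x,y}$ for $x\ne y$, evaluation at $\mathrm{id}_x$ on $\mathcal{C}^{x,x}$; comultiplication $\mathcal{C}^{x,y}\to\bigoplus_z\mathcal{C}^{x,z}\otimes\mathcal{C}^{z,y}$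 dual to composition $g\otimes h\mapsto hg$. A left contramodule over a coalgebra $(\mathcal{C},\mu,\epsilon)$ is a space $\mathfrak{P}$ with $\pi:\operatorname{Hom}_k(\mathcal{C},\mathfrak{P})\to\mathfrak{P}$ such that $\pi(c\mapsto\epsilon(c)p)=p$ and, under $\operatorname{Hom}_k(\mathcal{C},\operatorname{Hom}_k(\mathcal{C},\mathfrak{P}))\cong\operatorname{Hom}_k(\mathcal{C}\otimes\mathcal{C},\mathfrak{P})$, $f\mapsto(c'\otimes c''\mapsto f(c'')(c'))$, $\pi(c\mapsto\pi(f(c)))=\pi(f\circ\mu)$; morphisms commute with $\pi$. Set $\varphi\cdot p=\pi(c\mapsto\varphi(c)p)$. The functor $\Theta_\mathsf{F}$: with $e_x$ evaluation at $\mathrm{id}_x$ on $\mathcal{C}^{x,x}$ (zero elsewhere) and $\mathrm{ev}_f$, for $f\in\operatorname{Hom}_\mathsf{F}(x,y)$, evaluation at $f$ on $\mathcal{C}^{x,y}$ (zero elsewhere), $\Theta_\mathsf{F}(\mathfrak{P})(x)=e_x\cdot\mathfrak{P}$, $f$ acting by $p\mapsto\mathrm{ev}_f\cdot p$, restriction on morphisms. *)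

(* Defs.v *)
From HB Require Import structures.
From mathcomp Require Import all_boot all_order all_algebra.
From Stdlib Require Import ClassicalEpsilon ProofIrrelevance FunctionalExtensionality.
From Stdlib Require List.

Set Implicit Arguments.
Unset Strict Implicit.
Unset Printing Implicit Defensive.

Import GRing.Theory.
Local Open Scope ring_scope.

(* [hcomp g h] is the composite "h g" of g : x -> y and h : y -> z.           *)
Record linCat (k : fieldType) := LinCat {
  obj : Type;
  hom : obj -> obj -> vectType k;
  hcomp : forall x y z, hom x y -> hom y z -> hom x z;
  idm : forall x, hom x x;
  comp_linl : forall x y z (h : hom y z), linear (fun g : hom x y => hcomp g h);
  comp_linr : forall x y z (g : hom x y), linear (fun h : hom y z => hcomp g h);
  compA : forall x y z w (f : hom x y) (g : hom y z) (h : hom z w),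
    hcomp (hcomp f g) h = hcomp f (hcomp g h);
  comp1f : forall x y (f : hom x y), hcomp (idm x) f = f;
  compf1 : forall x y (f : hom x y), hcomp f (idm y) = f;
  idm_neq0 : forall x, idm x != 0 }.

Arguments hcomp {k} l {x y z}.
Arguments idm {k} l x.
Arguments hom {k} l.

Section Defs.
Variable k : fieldType.

Section Cat.
Variable F : linCat k.

Definition homnz (x y : obj F) : Prop := exists f : hom F x y, f <> 0.

Inductive preceq : obj F -> obj F -> Prop :=
  | preceq1 x y : homnz x y -> preceq x y
  | preceqS x y z : homnz x y -> preceq y z -> preceq x z.

Definition simeq (x y : obj F) : Prop := preceq x y /\ preceq y x.

(* together with the finite-dimensionality of the Hom spaces (built into
   linCat via vectType), this is local finiteness *)
Definition locally_finite : Prop :=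
  forall x y : obj F, exists s : list (obj F),
    forall z, preceq x z -> preceq z y -> List.In z s.

Lemma preceq_trans x y z : preceq x y -> preceq y z -> preceq x z.
Proof.
elim=> [a b hab|a b c hab _ IH] hz; first exact: preceqS hab hz.
exact: preceqS hab (IH hz).
Qed.

Lemma simeq_trans x y z : simeq x y -> simeq y z -> simeq x z.
Proof. by case=> h1 h2 [h3 h4]; split; apply: preceq_trans; eassumption. Qed.

Lemma simeq_refl x : simeq x x.
Proof.
have h : preceq x x.
  by apply: preceq1; exists (idm F x); apply/eqP; exact: idm_neq0.
by split.
Qed.

Lemma linear_at0 (U V : lmodType k) (f : U -> V) : linear f -> f 0 = 0.
Proof.
move=> hf; have := hf (-1) 0 0.
by rewrite scaler0 addr0 scaleN1r addNr.
Qed.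

End Cat.

Section Short.
Variable E : linCat k.

Definition short_homS (x y : obj E) : {vspace hom E x y} :=
  if excluded_middle_informative (simeq x y) then fullv else 0%VS.

Definition short_hom (x y : obj E) : vectType k := subvs_of (short_homS x y).

Lemma short_homS_nsim x y : ~ simeq x y -> short_homS x y = 0%VS.
Proof. by move=> ns; rewrite /short_homS; case: excluded_middle_informative. Qed.

Lemma short_homS_sim x y : simeq x y -> short_homS x y = fullv.
Proof. by move=> s; rewrite /short_homS; case: excluded_middle_informative. Qed.

Lemma short_hom0 x y (u : short_hom x y) : ~ simeq x y -> vsval u = 0.
Proof.
move=> ns; suff h : forall v, v \in short_homS x y -> v = 0 by exact: h (subvsP u).
by move=> v; rewrite (short_homS_nsim ns) memv0 => /eqP.
Qed.

Lemma short_comp_mem x y z (u : short_hom x y) (v : short_hom y z) :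
  hcomp E (vsval u) (vsval v) \in short_homS x z.
Proof.
case: (classic (simeq x z)) => [sxz|nxz].
  by rewrite (short_homS_sim sxz) memvf.
case: (classic (simeq x y)) => sxy.
  case: (classic (simeq y z)) => syz; first by case: nxz; exact: simeq_trans syz.
  have h0 := linear_at0 (comp_linr (vsval u)).
  by rewrite (short_hom0 v syz) h0 mem0v.
have h0 := linear_at0 (comp_linl (vsval v)).
by rewrite (short_hom0 u sxy) h0 mem0v.
Qed.

Definition short_comp x y z (u : short_hom x y) (v : short_hom y z) :
  short_hom x z := Subvs (short_comp_mem u v).

Lemma short_idm_mem x : idm E x \in short_homS x x.
Proof. by rewrite (short_homS_sim (simeq_refl x)) memvf. Qed.

Definition short_idm x : short_hom x x := Subvs (short_idm_mem x).

Lemma short_valK x y (u v : short_hom x y) : vsval u = vsval v -> u = v.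
Proof. exact: val_inj. Qed.

Lemma short_comp_linl x y z (h : short_hom y z) :
  linear (fun g : short_hom x y => short_comp g h).
Proof.
move=> a g1 g2; apply: val_inj => /=.
by rewrite (comp_linl (vsval h)).
Qed.

Lemma short_comp_linr x y z (g : short_hom x y) :
  linear (fun h : short_hom y z => short_comp g h).
Proof.
move=> a g1 g2; apply: val_inj => /=.
by rewrite (comp_linr (vsval g)).
Qed.

Lemma short_compA x y z w (f : short_hom x y) (g : short_hom y z)
  (h : short_hom z w) :
  short_comp (short_comp f g) h = short_comp f (short_comp g h).
Proof. by apply: val_inj => /=; rewrite compA. Qed.

Lemma short_comp1f x y (f : short_hom x y) : short_comp (short_idm x) f = f.
Proof. by apply: val_inj => /=; rewrite comp1f. Qed.

Lemma short_compf1 x y (f : short_hom x y) : short_comp f (short_idm y) = f.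
Proof. by apply: val_inj => /=; rewrite compf1. Qed.

Lemma short_idm_neq0 x : short_idm x != 0.
Proof.
apply/eqP => h; have := congr1 (@vsval _ _ _) h => /=.
by move/eqP; apply/negP; exact: idm_neq0.
Qed.

Definition short : linCat k :=
  @LinCat k (obj E) short_hom short_comp short_idm short_comp_linl
    short_comp_linr short_compA short_comp1f short_compf1 short_idm_neq0.

End Short.

Section Contra.
Variable F : linCat k.

Definition Cxy (x y : obj F) : vectType k := 'Hom(hom F x y, k^o).

(* [at2 f a b] is f if (a,b) = (x,y) and 0 otherwise, for f : Hom_F(x,y);
   evaluating the summand C^{a,b} at [at2 f a b] for all (a,b) is the
   functional ev_f on C_F = (+)_{a,b} C^{a,b}.  In particular e_x is
   evaluation at [at2 (idm F x)], and the counit is evaluation at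
   [fun a b => at2 (idm F a) a b]. *)
Definition at2 (x y : obj F) (f : hom F x y) (a b : obj F) : hom F a b :=
  match excluded_middle_informative ((x, y) = (a, b)) with
  | left e => eq_rect (x, y) (fun p : obj F * obj F => hom F p.1 p.2) f (a, b) e
  | right _ => 0
  end.

(* Hom_k(C_F, P): a linear map out of the direct sum C_F = (+)_{a,b} C^{a,b}
   is the same as a family of linear maps C^{a,b} -> P. *)
Definition linfam (P : lmodType k) :=
  {f : forall a b : obj F, Cxy a b -> P | forall a b, linear (f a b)}.

Definition mkfam (P : lmodType k) (f : forall a b : obj F, Cxy a b -> P)
  (hf : forall a b, linear (f a b)) : linfam P :=
  exist (fun f : forall a b : obj F, Cxy a b -> P => forall a b, linear (f a b))
        f hf.

Lemma linfam_ext (P : lmodType k) (f g : linfam P) :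
  (forall a b c, sval f a b c = sval g a b c) -> f = g.
Proof.
move: f g => [f hf] [g hg] /= h.
have efg : f = g.
  apply: functional_extensionality_dep => a.
  apply: functional_extensionality_dep => b.
  apply: functional_extensionality => c; exact: h.
by subst g; rewrite (proof_irrelevance _ hf hg).
Qed.

Lemma lincomb_lin (P : lmodType k) (al : k) (f g : linfam P) a b :
  linear (fun c : Cxy a b => al *: sval f a b c + sval g a b c).
Proof.
move=> r c d; rewrite (svalP f a b) (svalP g a b).
by rewrite scalerDr !scalerDr !scalerA mulrC addrACA.
Qed.

Definition lincomb (P : lmodType k) (al : k) (f g : linfam P) : linfam P :=
  @mkfam P (fun a b (c : Cxy a b) => al *: sval f a b c + sval g a b c) (fun a b => @lincomb_lin P al f g a b).

(* the element  c |-> phi(c) p  of Hom_k(C_F, P), where phi in C_F^* is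
   evaluation of each summand C^{a,b} at the vector v a b of Hom_F(a,b) *)
Lemma ptfam_lin (P : lmodType k) (v : forall a b, hom F a b) (p : P) a b :
  linear (fun c : Cxy a b => (c (v a b) : k) *: p).
Proof.
by move=> r c d; rewrite add_lfunE scale_lfunE /= scalerDl scalerA.
Qed.

Definition ptfam (P : lmodType k) (v : forall a b, hom F a b) (p : P) :
  linfam P := @mkfam P (fun a b (c : Cxy a b) => (c (v a b) : k) *: p)
                      (fun a b => @ptfam_lin P v p a b).

Lemma mapfam_lin (P Q : lmodType k) (g : P -> Q) (hg : linear g)
  (f : linfam P) a b : linear (fun c : Cxy a b => g (sval f a b c)).
Proof. by move=> r c d; rewrite (svalP f a b) hg. Qed.

Definition mapfam (P Q : lmodType k) (g : P -> Q) (hg : linear g)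
  (f : linfam P) : linfam Q :=
  @mkfam Q (fun a b (c : Cxy a b) => g (sval f a b c)) (fun a b => @mapfam_lin P Q g hg f a b).

(* Hom_k(C_F, Hom_k(C_F, P)) ~= Hom_k(C_F (x) C_F, P), f |-> (c' (x) c'' |->
   f(c'')(c')): families of bilinear maps C^{a,b} x C^{x,y} -> P,
   B a b x y c' c'' = f(c'')(c') *)
Definition bifam (P : lmodType k) :=
  {B : forall a b x y : obj F, Cxy a b -> Cxy x y -> P |
     (forall a b x y (c : Cxy x y), linear (fun c' : Cxy a b => B a b x y c' c))
  /\ (forall a b x y (c' : Cxy a b), linear (B a b x y c'))}.

Definition bif_app (P : lmodType k) (B : bifam P) x y (c : Cxy x y) :
  linfam P :=
  @mkfam P (fun a b (c' : Cxy a b) => sval B a b x y c' c)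
          (fun a b => proj1 (svalP B) a b x y c).

Definition pi_linear (P : lmodType k) (pi : linfam P -> P) : Prop :=
  forall (al : k) (f g : linfam P), pi (lincomb al f g) = al *: pi f + pi g.

Lemma assoc_lhs_lin (P : lmodType k) (pi : linfam P -> P) (hpi : pi_linear pi)
  (B : bifam P) x y : linear (fun c : Cxy x y => pi (bif_app B c)).
Proof.
move=> r c d; rewrite -hpi; congr pi; apply: linfam_ext => a b c' /=.
exact: (proj2 (svalP B)).
Qed.

Definition assoc_lhs (P : lmodType k) (pi : linfam P -> P)
  (hpi : pi_linear pi) (B : bifam P) : linfam P :=
  @mkfam P (fun x y (c : Cxy x y) => pi (bif_app B c)) (fun x y => @assoc_lhs_lin P pi hpi B x y).

(* the comultiplication of C_F, written out: for c in C^{x,y},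
     mu(c) = sum_z sum_{i,j} c(h_j g_i) g_i^v (x) h_j^v  in
     (+)_z C^{x,z} (x) C^{z,y},
   where (g_i) is a basis of Hom_F(x,z) with dual basis (g_i^v) and (h_j) a
   basis of Hom_F(z,y) with dual basis (h_j^v); only the z with
   Hom_F(x,z) <> 0 and Hom_F(z,y) <> 0 contribute, and [zlist x y] lists
   them without repetition (such a list exists when F is locally finite). *)
Definition zlist (x y : obj F) : list (obj F) :=
  epsilon (inhabits nil) (fun s : list (obj F) =>
    List.NoDup s /\ forall z, List.In z s <-> (homnz x z /\ homnz z y)).

Definition bas (x y : obj F) (i : 'I_(\dim (fullv : {vspace hom F x y}))) :
  hom F x y := tnth (vbasis fullv) i.

Definition dualb (x y : obj F) (i : 'I_(\dim (fullv : {vspace hom F x y}))) :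
  Cxy x y := linfun (fun v : hom F x y => (coord (vbasis fullv) i v : k^o)).

Definition fmu (P : lmodType k) (B : bifam P) (x y : obj F) (c : Cxy x y) : P :=
  \sum_(z <- zlist x y)
    \sum_(i < \dim (fullv : {vspace hom F x z}))
      \sum_(j < \dim (fullv : {vspace hom F z y}))
        (c (hcomp F (bas i) (bas j)) : k) *: sval B x z z y (dualb i) (dualb j).

Lemma fmu_lin (P : lmodType k) (B : bifam P) x y : linear (@fmu P B x y).
Proof.
move=> r c d; rewrite /fmu scaler_sumr -big_split; apply: eq_bigr => z _.
rewrite scaler_sumr -big_split; apply: eq_bigr => i _.
rewrite scaler_sumr -big_split; apply: eq_bigr => j _.
by rewrite add_lfunE scale_lfunE /= scalerDl scalerA.
Qed.

Definition assoc_rhs (P : lmodType k) (B : bifam P) : linfam P :=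
  @mkfam P (@fmu P B) (fun x y => @fmu_lin P B x y).

Record contramod := Contra {
  cP :> lmodType k;
  cpi : linfam cP -> cP;
  cpi_lin : pi_linear cpi;
  cpi_counit : forall p : cP, cpi (ptfam (fun a b => at2 (idm F a) a b) p) = p;
  cpi_assoc : forall B : bifam cP, cpi (assoc_lhs cpi_lin B) = cpi (assoc_rhs B)
}.

Record contra_hom (P Q : contramod) := ContraHom {
  chf :> P -> Q;
  ch_lin : linear chf;
  ch_pi : forall f : linfam P, chf (cpi f) = cpi (mapfam ch_lin f)
}.

Definition dact (P : contramod) (v : forall a b, hom F a b) (p : P) : P :=
  cpi (ptfam v p).

Definition eact (P : contramod) (x : obj F) (p : P) : P := dact (at2 (idm F x)) p.

Definition evact (P : contramod) (x y : obj F) (f : hom F x y) (p : P) : P :=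
  dact (at2 f) p.

(* p lies in Theta_F(P)(x) = e_x . P *)
Definition inTheta (P : contramod) (x : obj F) (p : P) : Prop :=
  exists q : P, p = eact x q.

Record fmodule := FModule {
  mobj :> obj F -> lmodType k;
  mact : forall x y, hom F x y -> mobj x -> mobj y;
  mact_lin : forall x y (f : hom F x y), linear (mact f);
  mact_linf : forall x y (m : mobj x), linear (fun f : hom F x y => mact f m);
  mact_id : forall x (m : mobj x), mact (idm F x) m = m;
  mact_comp : forall x y z (g : hom F x y) (h : hom F y z) (m : mobj x),
    mact (hcomp F g h) m = mact h (mact g m)
}.

(* eta is (the family of restrictions to the e_x . P of) a morphism of
   F-modules Theta_F(P) -> Theta_F(Q): each eta x maps e_x . P linearly into
   e_x . Q, naturally in x (f acts on Theta_F(P) by p |-> ev_f . p). *)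
Definition Theta_hom (P Q : contramod) (eta : forall x : obj F, P -> Q) : Prop :=
  [/\ forall x (p : P), inTheta x p -> inTheta x (eta x p),
      forall x (al : k) (p1 p2 : P), inTheta x p1 -> inTheta x p2 ->
        eta x (al *: p1 + p2) = al *: eta x p1 + eta x p2
    & forall x y (f : hom F x y) (p : P), inTheta x p ->
        eta y (evact f p) = evact f (eta x p)].

(* phi is (the family of restrictions to the e_x . P of) an isomorphism of
   F-modules Theta_F(P) -> M *)
Definition Theta_iso (P : contramod) (M : fmodule) (phi : forall x : obj F, P -> M x)
  : Prop :=
  [/\ forall x (al : k) (p1 p2 : P), inTheta x p1 -> inTheta x p2 ->
        phi x (al *: p1 + p2) = al *: phi x p1 + phi x p2,
      forall x (p1 p2 : P), inTheta x p1 -> inTheta x p2 ->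
        phi x p1 = phi x p2 -> p1 = p2,
      forall x (m : M x), exists2 p : P, inTheta x p & phi x p = m
    & forall x y (f : hom F x y) (p : P), inTheta x p ->
        phi y (evact f p) = mact f (phi x p)].

(* Theta_F is an equivalence of categories: faithful, full, and essentially
   surjective *)
Definition Theta_equivalence : Prop :=
  [/\ (forall (P Q : contramod) (g1 g2 : contra_hom P Q),
         (forall x (p : P), inTheta x p -> g1 p = g2 p) -> forall p, g1 p = g2 p),
      (forall (P Q : contramod) (eta : forall x : obj F, P -> Q),
         Theta_hom eta ->
         exists g : contra_hom P Q, forall x (p : P), inTheta x p -> g p = eta x p)
    & (forall M : fmodule,
         exists (P : contramod) (phi : forall x : obj F, P -> M x), Theta_iso phi)].

End Contra.
End Defs.

(* Main.v *)
Require Import Defs.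
From HB Require Import structures.
From mathcomp Require Import all_boot all_order all_algebra.
From Stdlib Require Import ClassicalEpsilon ProofIrrelevance FunctionalExtensionality PropExtensionality Classical.
From Stdlib Require List.

Set Implicit Arguments.
Unset Strict Implicit.
Unset Printing Implicit Defensive.

Import GRing.Theory.
Local Open Scope ring_scope.

Notation dimh F x y := (\dim (fullv : {vspace Defs.hom F x y})).

Section Gen.
Variable k : fieldType.

Lemma linD (U V : lmodType k) (f : U -> V) : linear f -> forall a b, f (a + b) = f a + f b.
Proof. by move=> hf a b; have := hf 1 a b; rewrite !scale1r. Qed.

Lemma linZ (U V : lmodType k) (f : U -> V) : linear f -> forall r a, f (r *: a) = r *: f a.
Proof. by move=> hf r a; have := hf r a 0; rewrite !addr0 (linear_at0 hf) addr0. Qed.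

Lemma lin_sum (U V : lmodType k) (f : U -> V) (I : Type) (r : seq I) (P : pred I) (G : I -> U) :
  linear f -> f (\sum_(i <- r | P i) G i) = \sum_(i <- r | P i) f (G i).
Proof.
move=> hf; elim: r => [|a r IH]; first by rewrite !big_nil (linear_at0 hf).
by rewrite !big_cons; case: (P a); rewrite ?(linD hf) IH.
Qed.

Lemma sum_in0 (V : zmodType) (T : Type) (l : list T) (S : T -> V) :
  (forall z, List.In z l -> S z = 0) -> \sum_(z <- l) S z = 0.
Proof.
elim: l => [|a l IH] h; first by rewrite big_nil.
rewrite big_cons h /=; last by left.
by rewrite add0r IH // => z hz; apply: h; right.
Qed.

Lemma sum_single (V : zmodType) (T : Type) (l : list T) (S : T -> V) z0 :
  List.NoDup l -> (forall z, z <> z0 -> S z = 0) -> (~ List.In z0 l -> S z0 = 0) ->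
  \sum_(z <- l) S z = S z0.
Proof.
elim: l => [|a l IH] nd h1 h2; first by rewrite big_nil h2.
move/List.NoDup_cons_iff: nd => [nal ndl].
rewrite big_cons.
case: (classic (a = z0)) => [e|ne].
  subst a; rewrite sum_in0 ?addr0 // => z hz; apply: h1 => e; subst z; exact: nal hz.
rewrite h1 // add0r IH // => nin; apply: h2 => [[e|//]]; exact: ne e.
Qed.

Lemma eq_sum_in (V : zmodType) (T : Type) (l : list T) (S1 S2 : T -> V) :
  (forall z, List.In z l -> S1 z = S2 z) -> \sum_(z <- l) S1 z = \sum_(z <- l) S2 z.
Proof.
elim: l => [|a l IH] h; first by rewrite !big_nil.
rewrite !big_cons h /=; last by left.
by rewrite IH // => z hz; apply: h; right.
Qed.

Section Cat.
Variable F : linCat k.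

Lemma hcomp0l x y z (g : Defs.hom F y z) : hcomp F (0 : Defs.hom F x y) g = 0.
Proof. exact: (linear_at0 (comp_linl g)). Qed.
Lemma hcomp0r x y z (g : Defs.hom F x y) : hcomp F g (0 : Defs.hom F y z) = 0.
Proof. exact: (linear_at0 (comp_linr g)). Qed.

Lemma nhomnz x y : ~ homnz x y -> forall f : Defs.hom F x y, f = 0.
Proof. by move=> h f; apply: NNPP => nf; apply: h; exists f. Qed.

Lemma at2_eq x y (f : Defs.hom F x y) : at2 f x y = f.
Proof.
rewrite /at2; case: excluded_middle_informative => // e.
by rewrite (proof_irrelevance _ e erefl).
Qed.

Lemma at2_neq x y (f : Defs.hom F x y) a b : (x, y) <> (a, b) -> at2 f a b = 0.
Proof. by rewrite /at2; case: excluded_middle_informative. Qed.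

Lemma at2_neqL x y (f : Defs.hom F x y) a b : x <> a -> at2 f a b = 0.
Proof. by move=> n; apply: at2_neq; case=> /n. Qed.

Lemma at2_neqR x y (f : Defs.hom F x y) a b : y <> b -> at2 f a b = 0.
Proof. by move=> n; apply: at2_neq; case=> _ /n. Qed.

Lemma dualbE x y (i : 'I_(\dim (fullv : {vspace Defs.hom F x y}))) (v : Defs.hom F x y) :
  dualb i v = coord (vbasis fullv) i v.
Proof. by rewrite /dualb lfunE. Qed.

Lemma bas_expand x y (v : Defs.hom F x y) : v = \sum_(i < dimh F x y) (dualb i v : k) *: bas i.
Proof.
rewrite {1}(coord_vbasis (memvf v)); apply: eq_bigr => i _.
by rewrite dualbE /bas (tnth_nth 0).
Qed.

Lemma dual_expand x y (c : Cxy x y) : c = \sum_(i < dimh F x y) (c (bas i) : k) *: dualb i.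
Proof.
apply/lfunP => v; rewrite sum_lfunE {1}(bas_expand v) linear_sum.
apply: eq_bigr => i _; rewrite scale_lfunE linearZ /= dualbE.
by rewrite /GRing.scale /= mulrC.
Qed.

End Cat.
End Gen.

Section Contra.
Variable k : fieldType.
Variable F : linCat k.

Lemma zfam_lin (P : lmodType k) (a b : obj F) : linear (fun c : Cxy a b => (0 : P)).
Proof. by move=> r c d; rewrite scaler0 addr0. Qed.

Definition zfam (P : lmodType k) : linfam F P := @mkfam k F P (fun a b c => 0) (@zfam_lin P).

Section P.
Variable P : contramod F.

Lemma pi_ext (f g : linfam F P) : (forall a b c, sval f a b c = sval g a b c) -> cpi f = cpi g.
Proof. by move=> h; rewrite (linfam_ext h). Qed.

Lemma pi_zero (f : linfam F P) : (forall a b c, sval f a b c = 0) -> cpi f = 0.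
Proof.
move=> h; have e : f = lincomb (-1) f f.
  by apply: linfam_ext => a b c /=; rewrite h scaler0 addr0.
have := @cpi_lin _ _ P (-1) f f; rewrite -e scaleN1r => h2.
by rewrite addNr in h2.
Qed.

Lemma pi_comb (al : k) (f g h : linfam F P) :
  (forall a b c, sval f a b c = al *: sval g a b c + sval h a b c) -> cpi f = al *: cpi g + cpi h.
Proof. by move=> e; rewrite -cpi_lin; apply: pi_ext. Qed.

Lemma pi_scale (al : k) (f g : linfam F P) :
  (forall a b c, sval f a b c = al *: sval g a b c) -> cpi f = al *: cpi g.
Proof.
move=> e; rewrite -[al *: _]addr0 -(@pi_zero (zfam P)) //.
by apply: pi_comb => a b c; rewrite e addr0.
Qed.

Lemma fsum_lin (I : Type) (r : seq I) (G : I -> linfam F P) (a b : obj F) :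
  linear (fun c : Cxy a b => \sum_(i <- r) sval (G i) a b c).
Proof.
move=> al c d; rewrite scaler_sumr -big_split; apply: eq_bigr => i _.
exact: (svalP (G i) a b).
Qed.

Lemma pi_sum (I : Type) (r : seq I) (G : I -> linfam F P) (f : linfam F P) :
  (forall a b c, sval f a b c = \sum_(i <- r) sval (G i) a b c) ->
  cpi f = \sum_(i <- r) cpi (G i).
Proof.
elim: r f => [|i r IH] f e.
  by rewrite big_nil; apply: pi_zero => a b c; rewrite e big_nil.
pose f' := @mkfam k F P _ (fsum_lin r G).
rewrite big_cons -(IH f') // -[cpi (G i)]scale1r.
by apply: pi_comb => a b c; rewrite e big_cons scale1r.
Qed.

Lemma dact_lin (v : forall a b, Defs.hom F a b) (al : k) (p q : P) :
  dact v (al *: p + q) = al *: dact v p + dact v q.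
Proof.
apply: pi_comb => a b c /=.
by rewrite scalerDr !scalerA mulrC.
Qed.

Lemma dact0 (v : forall a b, Defs.hom F a b) : dact v (0 : P) = 0.
Proof. by apply: pi_zero => a b c /=; rewrite scaler0. Qed.

End P.
End Contra.

Section Master.
Variable k : fieldType.
Variable F : linCat k.
Variable P : contramod F.

Lemma master (v : forall a b, Defs.hom F a b) (fx : obj F -> linfam F P) (f1 f2 : linfam F P) :
  (forall x y (c : Cxy x y), sval f1 x y c = (c (v x y) : k) *: cpi (fx x)) ->
  (forall x y (c : Cxy x y), sval f2 x y c =
     \sum_(z <- zlist x y) \sum_(i < dimh F x z)
        (c (hcomp F (bas i) (v z y)) : k) *: sval (fx z) x z (dualb i)) ->
  cpi f1 = cpi f2.
Proof.
move=> e1 e2.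
have l1 : forall (a b x y : obj F) (c : Cxy x y),
    linear (fun c' : Cxy a b => (c (v x y) : k) *: sval (fx x) a b c').
  by move=> a b x y c r c1 c2; rewrite (svalP (fx x) a b) scalerDr !scalerA mulrC.
have l2 : forall (a b x y : obj F) (c' : Cxy a b),
    linear (fun c : Cxy x y => (c (v x y) : k) *: sval (fx x) a b c').
  by move=> a b x y c' r c1 c2; rewrite add_lfunE scale_lfunE /= scalerDl scalerA.
pose B : bifam F P := exist _ (fun (a b x y : obj F) (c' : Cxy a b) (c : Cxy x y) =>
   (c (v x y) : k) *: sval (fx x) a b c') (conj l1 l2).
have := @cpi_assoc _ _ P B.
have -> : cpi (assoc_lhs (@cpi_lin _ _ P) B) = cpi f1.
  by apply: pi_ext => x y c /=; rewrite e1; apply: pi_scale => a b c' /=.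
move=> ->; apply: pi_ext => x y c /=; rewrite e2 /fmu; apply: eq_bigr => z _.
apply: eq_bigr => i _ /=.
under eq_bigr do rewrite scalerA.
rewrite -scaler_suml; congr (_ *: _).
rewrite {2}(bas_expand (v z y)) (lin_sum _ _ _ (comp_linr (bas i))) linear_sum /=.
by apply: eq_bigr => j _; rewrite (linZ (comp_linr (bas i))) linearZ /= mulrC.
Qed.

End Master.

Section Derived.
Variable k : fieldType.
Variable F : linCat k.

Definition zspec := forall x y : obj F, List.NoDup (zlist x y) /\
   forall z, List.In z (zlist x y) <-> homnz x z /\ homnz z y.

Hypothesis zs : zspec.

Lemma zsum (V : zmodType) (x y : obj F) (S : obj F -> V) z0 :
  (forall z, z <> z0 -> S z = 0) -> (~ (homnz x z0 /\ homnz z0 y) -> S z0 = 0) ->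
  \sum_(z <- zlist x y) S z = S z0.
Proof.
move=> h1 h2; have [nd hin] := zs x y.
by apply: sum_single => // nin; apply: h2 => hh; apply: nin; apply/hin.
Qed.

Lemma basE (P : lmodType k) (x y z : obj F) (c : Cxy x y) (w : Defs.hom F x z) (v : Defs.hom F z y) (q : P) :
  \sum_(i < dimh F x z) (c (hcomp F (bas i) v) : k) *: ((dualb i w : k) *: q) =
  (c (hcomp F w v) : k) *: q.
Proof.
under eq_bigr do rewrite scalerA.
rewrite -scaler_suml; congr (_ *: _).
rewrite {2}(bas_expand w) (lin_sum _ _ _ (comp_linl v)) linear_sum /=.
by apply: eq_bigr => j _; rewrite (linZ (comp_linl v)) linearZ /= mulrC.
Qed.

Lemma compE (a m b x y : obj F) (u : Defs.hom F a m) (h : Defs.hom F m b) (c : Cxy x y) :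
  \sum_(z <- zlist x y) (c (hcomp F (at2 u x z) (at2 h z y)) : k) =
  c (at2 (hcomp F u h) x y).
Proof.
rewrite (@zsum _ x y _ m).
- case: (classic (x = a)) => [ex|nx]; last first.
    have nx' := not_eq_sym nx.
    by rewrite (at2_neqL u _ nx') (at2_neqL (hcomp F u h) _ nx') hcomp0l.
  subst x; rewrite at2_eq.
  case: (classic (y = b)) => [ey|ny]; last first.
    have ny' := not_eq_sym ny.
    by rewrite (at2_neqR h _ ny') (at2_neqR (hcomp F u h) _ ny') hcomp0r.
  by subst y; rewrite !at2_eq.
- move=> z nz; have nz' := not_eq_sym nz.
  by rewrite (at2_neqL h _ nz') hcomp0r linear0.
- move=> nn.
  case: (classic (homnz x m)) => hxm.
    have hmy : ~ homnz m y by move=> hmy; apply: nn.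
    by rewrite (nhomnz hmy (at2 h m y)) hcomp0r linear0.
  by rewrite (nhomnz hxm (at2 u x m)) hcomp0l linear0.
Qed.

Lemma compE0 (a m m' b x y z : obj F) (u : Defs.hom F a m) (h : Defs.hom F m' b) (c : Cxy x y) :
  m <> m' -> (c (hcomp F (at2 u x z) (at2 h z y)) : k) = 0.
Proof.
move=> nm; case: (classic (z = m)) => [ez|nz].
  by subst z; rewrite (at2_neqL h _ (not_eq_sym nm)) hcomp0r linear0.
by rewrite (at2_neqR u _ (not_eq_sym nz)) hcomp0l linear0.
Qed.

Section P.
Variable P : contramod F.

Lemma conv (a m b : obj F) (u : Defs.hom F a m) (h : Defs.hom F m b) (q : P) :
  evact h (evact u q) = evact (hcomp F u h) q.
Proof.
apply: (@master _ _ P (at2 h) (fun _ => ptfam (at2 u) q)) => // x y c /=.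
under eq_bigr do rewrite basE.
by rewrite -scaler_suml compE.
Qed.

Lemma conv0 (a m m' b : obj F) (u : Defs.hom F a m) (h : Defs.hom F m' b) (q : P) :
  m <> m' -> evact h (evact u q) = 0.
Proof.
move=> nm; rewrite -(@pi_zero _ _ P (zfam F P)) //.
apply: (@master _ _ P (at2 h) (fun _ => ptfam (at2 u) q)) => // x y c /=.
rewrite big1 // => z _; rewrite basE.
by rewrite compE0 ?scale0r.
Qed.

Lemma eactE (x : obj F) (q : P) : eact x q = evact (idm F x) q.
Proof. by []. Qed.

Lemma eact_idem (x : obj F) (q : P) : eact x (eact x q) = eact x q.
Proof. by rewrite !eactE conv comp1f. Qed.

Lemma inThetaE (x : obj F) (p : P) : inTheta x p <-> eact x p = p.
Proof.
split; first by case=> q ->; rewrite eact_idem.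
by move=> e; exists p.
Qed.

Lemma recfam_lin (p : P) (x y : obj F) :
  linear (fun c : Cxy x y => (c (at2 (idm F x) x y) : k) *: eact x p).
Proof. by move=> r c d; rewrite add_lfunE scale_lfunE /= scalerDl scalerA. Qed.

Definition recfam (p : P) : linfam F P := @mkfam _ F P _ (@recfam_lin p).

Lemma rec (p : P) : cpi (recfam p) = p.
Proof.
rewrite -{2}(@cpi_counit _ _ P p).
apply: (@master _ _ P (fun x y => at2 (idm F x) x y) (fun x => ptfam (at2 (idm F x)) p)) => //.
move=> x y c /=.
under eq_bigr do rewrite basE.
rewrite -scaler_suml (@zsum _ x y _ x).
- by rewrite at2_eq comp1f.
- by move=> z nz; rewrite (at2_neqL (idm F z) _ nz) hcomp0l linear0.
- move=> nn; have hxy : ~ homnz x y.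
    move=> hxy; apply: nn; split => //; exists (idm F x); apply/eqP; exact: idm_neq0.
  by rewrite (nhomnz hxy (at2 _ x y)) hcomp0r linear0.
Qed.

Lemma sigfam_lin (t : obj F -> P) (x y : obj F) :
  linear (fun c : Cxy x y => (c (at2 (idm F x) x y) : k) *: t x).
Proof. by move=> r c d; rewrite add_lfunE scale_lfunE /= scalerDl scalerA. Qed.

Definition sigfam (t : obj F -> P) : linfam F P := @mkfam _ F P _ (@sigfam_lin t).

Lemma eact_sig (t : obj F -> P) (y : obj F) : eact y (cpi (sigfam t)) = eact y (t y).
Proof.
apply: (@master _ _ P (at2 (idm F y)) (fun _ => sigfam t)) => // a b c /=.
under eq_bigr do rewrite basE.
case: (classic (a = y)) => [ea|na].
  by subst a; rewrite -scaler_suml compE comp1f.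
rewrite (at2_neqL (idm F y) _ (not_eq_sym na)) linear0 scale0r.
by rewrite big1 // => z _; rewrite compE0 ?scale0r // => e; apply: na.
Qed.

Lemma colfam_lin (x : obj F) (f : linfam F P) (a y : obj F) :
  linear (fun c : Cxy a y => \sum_(z <- zlist a y) \sum_(i < dimh F a z)
        (c (hcomp F (bas i) (at2 (idm F x) z y)) : k) *: sval f a z (dualb i)).
Proof.
move=> r c d; rewrite scaler_sumr -big_split; apply: eq_bigr => z _.
rewrite scaler_sumr -big_split; apply: eq_bigr => i _.
by rewrite add_lfunE scale_lfunE /= scalerDl scalerA.
Qed.

Definition colfam (x : obj F) (f : linfam F P) : linfam F P := @mkfam _ F P _ (@colfam_lin x f).

Lemma eact_pi (x : obj F) (f : linfam F P) : eact x (cpi f) = cpi (colfam x f).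
Proof. by apply: (@master _ _ P (at2 (idm F x)) (fun _ => f)). Qed.

Lemma colfam_col (x : obj F) (f : linfam F P) a y c : y <> x -> sval (colfam x f) a y c = 0.
Proof.
move=> ny /=; rewrite big1 // => z _; rewrite big1 // => i _.
by rewrite (at2_neqR (idm F x) _ (not_eq_sym ny)) hcomp0r linear0 scale0r.
Qed.

Lemma fd (x : obj F) (l : list (obj F)) (f : linfam F P) :
  List.NoDup l -> (forall a, ~ List.In a l -> ~ homnz a x) ->
  (forall a y c, y <> x -> sval f a y c = 0) ->
  cpi f = \sum_(a <- l) \sum_(i < dimh F a x) evact (bas i) (sval f a x (dualb i)).
Proof.
move=> nd hl hcol.
pose G a := @mkfam _ F P _ (fsum_lin (index_enum 'I_(dimh F a x))
     (fun i => ptfam (at2 (bas i)) (sval f a x (dualb i)))).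
rewrite (@pi_sum _ _ P _ l G f).
  apply: eq_bigr => a _; exact: pi_sum.
move=> a' y c /=.
case: (classic (y = x)) => [ey|ny]; last first.
  rewrite hcol // big1 // => a _; rewrite big1 // => i _.
  by rewrite (at2_neqR (bas i) _ (not_eq_sym ny)) linear0 scale0r.
subst y; rewrite (@sum_single _ _ _ _ a') //.
- under eq_bigr do rewrite at2_eq.
  rewrite {1}(dual_expand c) (lin_sum _ _ _ (svalP f a' x)).
  by apply: eq_bigr => i _; rewrite (linZ (svalP f a' x)).
- move=> a na; rewrite big1 // => i _.
  by rewrite (at2_neqL (bas i) _ na) linear0 scale0r.
- move=> nin; have hn := hl _ nin.
  by rewrite big1 // => i _; rewrite (nhomnz hn (bas i)) ?at2_eq ?linear0 ?scale0r.
Qed.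

End P.
End Derived.

Section Parts.
Variable k : fieldType.
Variable F : linCat k.
Hypothesis zs : zspec F.

Lemma dact_linear (P : contramod F) (v : forall a b, Defs.hom F a b) : linear (@dact _ _ P v).
Proof. by move=> al p q; rewrite dact_lin. Qed.

Lemma eact_lin (P : contramod F) x (al : k) (p q : P) :
  eact x (al *: p + q) = al *: eact x p + eact x q.
Proof. exact: dact_lin. Qed.

Lemma in_eact (P : contramod F) x (p : P) : inTheta x (eact x p).
Proof. by exists p. Qed.

Lemma in_evact (P : contramod F) a x (h : Defs.hom F a x) (p : P) : inTheta x (evact h p).
Proof. by apply/(inThetaE zs) => //; rewrite eactE conv // compf1. Qed.

Lemma evact_eact (P : contramod F) a x (h : Defs.hom F a x) (p : P) : evact h (eact a p) = evact h p.
Proof. by rewrite eactE conv // comp1f. Qed.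

Lemma part1 (P Q : contramod F) (g1 g2 : contra_hom P Q) :
  (forall x (p : P), inTheta x p -> g1 p = g2 p) -> forall p : P, g1 p = g2 p.
Proof.
move=> h p; rewrite -(rec zs p) !ch_pi; apply: pi_ext => x y c /=.
by rewrite !(linZ (ch_lin _)) (h x _ (in_eact x p)).
Qed.

Section Full.
Variables (P Q : contramod F) (eta : forall x : obj F, P -> Q).
Hypothesis hA : forall x (p : P), inTheta x p -> inTheta x (eta x p).
Hypothesis hB : forall x (al : k) (p1 p2 : P), inTheta x p1 -> inTheta x p2 ->
        eta x (al *: p1 + p2) = al *: eta x p1 + eta x p2.
Hypothesis hC : forall x y (f : Defs.hom F x y) (p : P), inTheta x p ->
        eta y (evact f p) = evact f (eta x p).
Hypothesis Ks : forall x : obj F, exists l, List.NoDup l /\ forall a, ~ List.In a l -> ~ homnz a x.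

Lemma in0 x : inTheta x (0 : P).
Proof. by apply/(inThetaE zs); exact: dact0. Qed.

Lemma inD x (al : k) (p q : P) : inTheta x p -> inTheta x q -> inTheta x (al *: p + q).
Proof. by move=> /(inThetaE zs) hp /(inThetaE zs) hq; apply/(inThetaE zs); rewrite eact_lin hp hq. Qed.

Lemma eta0 x : eta x 0 = 0.
Proof.
have := @hB x (-1) 0 0 (in0 x) (in0 x).
by rewrite scaler0 addr0 scaleN1r addNr.
Qed.

Lemma in_sum x (I : Type) (r : seq I) (G : I -> P) :
  (forall i, inTheta x (G i)) -> inTheta x (\sum_(i <- r) G i).
Proof.
move=> h; elim: r => [|i r IH]; first by rewrite big_nil; exact: in0.
by rewrite big_cons -[G i]scale1r; apply: inD.
Qed.

Lemma eta_sum x (I : Type) (r : seq I) (G : I -> P) :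
  (forall i, inTheta x (G i)) -> eta x (\sum_(i <- r) G i) = \sum_(i <- r) eta x (G i).
Proof.
move=> h; elim: r => [|i r IH]; first by rewrite !big_nil eta0.
rewrite !big_cons -[G i]scale1r hB ?scale1r ?IH //; exact: in_sum.
Qed.

Definition tf (p : P) : obj F -> Q := fun x => eta x (eact x p).

Definition gf (p : P) : Q := cpi (sigfam (tf p)).

Lemma gf_lin : linear gf.
Proof.
move=> al p q; apply: pi_comb => a b c /=; rewrite /tf.
rewrite eact_lin hB; [|exact: in_eact|exact: in_eact].
by rewrite scalerDr !scalerA mulrC.
Qed.

Lemma gf_theta x (p : P) : inTheta x p -> gf p = eta x p.
Proof.
move=> hp.
have e : gf p = eact x (eta x p).
  apply: pi_ext => a b c /=; rewrite /tf.
  case: (classic (a = x)) => [ea|na].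
    by subst a; move/(inThetaE zs): hp => ->.
  have -> : eact a p = 0.
    move/(inThetaE zs): hp => <-; rewrite eactE conv0 // => e; exact: na (esym e).
  by rewrite eta0 scaler0 (at2_neqL (idm F x) _ (not_eq_sym na)) linear0 scale0r.
by rewrite e; apply/(inThetaE zs); apply: hA.
Qed.

Lemma eact_gf a (p : P) : eact a (gf p) = eta a (eact a p).
Proof. by rewrite /gf (eact_sig zs) /tf; apply/(inThetaE zs); apply/hA/in_eact. Qed.

Lemma colfam_map x (f : linfam F P) a y c :
  sval (colfam x (mapfam gf_lin f)) a y c = gf (sval (colfam x f) a y c).
Proof.
rewrite /= (lin_sum _ _ _ gf_lin); apply: eq_bigr => z _.
rewrite (lin_sum _ _ _ gf_lin); apply: eq_bigr => i _.
by rewrite (linZ gf_lin).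
Qed.

Lemma gf_pi (f : linfam F P) : gf (cpi f) = cpi (mapfam gf_lin f).
Proof.
rewrite -[RHS](rec zs); apply: pi_ext => x y c /=; congr (_ *: _); rewrite /tf.
rewrite !eact_pi.
have [l [nd hl]] := Ks x.
rewrite (fd nd hl (@colfam_col _ _ _ x f)) (fd nd hl (@colfam_col _ _ _ x (mapfam gf_lin f))).
rewrite eta_sum; last by move=> a; apply: in_sum => i; apply: in_evact.
apply: eq_bigr => a _.
rewrite eta_sum; last by move=> i; apply: in_evact.
apply: eq_bigr => i _.
rewrite colfam_map.
set q := sval (colfam x f) a x (dualb i).
by rewrite -evact_eact (hC _ (in_eact _ _)) -eact_gf evact_eact.
Qed.

Definition gh : contra_hom P Q := ContraHom gf_pi.

End Full.
End Parts.

Section DProd.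
Variable k : fieldType.
Variable T : Type.
Variable M : T -> lmodType k.

Definition dprod := forall x, M x.

Definition dp_eq (p q : dprod) : bool := if excluded_middle_informative (p = q) then true else false.
Lemma dp_eqP : Equality.axiom dp_eq.
Proof. by move=> p q; rewrite /dp_eq; case: excluded_middle_informative => h; constructor. Qed.
HB.instance Definition _ := hasDecEq.Build dprod dp_eqP.

Definition dp_find (P : pred dprod) (n : nat) : option dprod :=
  match excluded_middle_informative (exists x, P x) with
  | left e => Some (proj1_sig (constructive_indefinite_description _ e))
  | right _ => None
  end.
Lemma dp_find_correct P n x : dp_find P n = Some x -> P x.
Proof.
rewrite /dp_find; case: excluded_middle_informative => // e [<-].
exact: (proj2_sig (constructive_indefinite_description _ e)).
Qed.
Lemma dp_find_complete (P : pred dprod) : (exists x, P x) -> exists n, dp_find P n.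
Proof. by move=> e; exists 0%N; rewrite /dp_find; case: excluded_middle_informative. Qed.
Lemma dp_find_ext (P Q : pred dprod) : P =1 Q -> dp_find P =1 dp_find Q.
Proof. by move=> /functional_extensionality ->. Qed.
HB.instance Definition _ := hasChoice.Build dprod dp_find_correct dp_find_complete dp_find_ext.

Definition dp_zero : dprod := fun x => 0.
Definition dp_opp (p : dprod) : dprod := fun x => - p x.
Definition dp_add (p q : dprod) : dprod := fun x => p x + q x.
Definition dp_scale (a : k) (p : dprod) : dprod := fun x => a *: p x.

Lemma dp_addA : associative dp_add.
Proof. by move=> p q r; apply: functional_extensionality_dep => x; rewrite /dp_add addrA. Qed.
Lemma dp_addC : commutative dp_add.
Proof. by move=> p q; apply: functional_extensionality_dep => x; rewrite /dp_add addrC. Qed.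
Lemma dp_add0 : left_id dp_zero dp_add.
Proof. by move=> p; apply: functional_extensionality_dep => x; rewrite /dp_add add0r. Qed.
Lemma dp_addN : left_inverse dp_zero dp_opp dp_add.
Proof. by move=> p; apply: functional_extensionality_dep => x; rewrite /dp_add addNr. Qed.
HB.instance Definition _ := GRing.isZmodule.Build dprod dp_addA dp_addC dp_add0 dp_addN.

Lemma dp_scaleA a b p : dp_scale a (dp_scale b p) = dp_scale (a * b) p.
Proof. by apply: functional_extensionality_dep => x; rewrite /dp_scale scalerA. Qed.
Lemma dp_scale1 : left_id 1 dp_scale.
Proof. by move=> p; apply: functional_extensionality_dep => x; rewrite /dp_scale scale1r. Qed.
Lemma dp_scaleDr : right_distributive dp_scale +%R.
Proof. by move=> a p q; apply: functional_extensionality_dep => x; rewrite /dp_scale scalerDr. Qed.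
Lemma dp_scaleDl p : {morph dp_scale^~ p : a b / a + b}.
Proof. by move=> a b; apply: functional_extensionality_dep => x; rewrite /dp_scale scalerDl. Qed.
HB.instance Definition _ := GRing.Zmodule_isLmodule.Build k dprod dp_scaleA dp_scale1 dp_scaleDr dp_scaleDl.

Lemma dpE_add (p q : dprod) x : (p + q) x = p x + q x. Proof. by []. Qed.
Lemma dpE_scale (a : k) (p : dprod) x : (a *: p) x = a *: p x. Proof. by []. Qed.
Lemma dpE_zero x : (0 : dprod) x = 0. Proof. by []. Qed.
Lemma dpE_sum (I : Type) (r : seq I) (G : I -> dprod) x :
  (\sum_(i <- r) G i) x = \sum_(i <- r) G i x.
Proof.
elim: r => [|i r IH]; first by rewrite !big_nil.
by rewrite !big_cons dpE_add IH.
Qed.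

End DProd.

Lemma sum_same (V : zmodType) (T : Type) (l1 l2 : list T) (S : T -> V) :
  List.NoDup l1 -> List.NoDup l2 -> (forall z, List.In z l1 -> List.In z l2) ->
  (forall z, List.In z l2 -> ~ List.In z l1 -> S z = 0) ->
  \sum_(z <- l1) S z = \sum_(z <- l2) S z.
Proof.
move=> n1 n2 h12 h0.
pose D a b := if excluded_middle_informative (a = b) then S b else 0.
have e1 : \sum_(a <- l1) S a = \sum_(a <- l1) \sum_(b <- l2) D a b.
  apply: eq_sum_in => a ha; rewrite (@sum_single _ _ _ _ a) //.
  - by rewrite /D; case: (excluded_middle_informative (a = a)).
  - by move=> b nb; rewrite /D; case: (excluded_middle_informative (a = b)) => // e; exfalso; exact: nb (esym e).
  - by move=> nin; case: nin; apply: h12.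
rewrite e1 exchange_big /=; apply: eq_sum_in => b hb.
rewrite (@sum_single _ _ _ _ b) //.
- by rewrite /D; case: (excluded_middle_informative (b = b)).
- by move=> a na; rewrite /D; case: (excluded_middle_informative (a = b)).
- move=> nin; rewrite /D; case: (excluded_middle_informative (b = b)) => _ /=; [exact: h0|done].
Qed.

Section Ess.
Variable k : fieldType.
Variable F : linCat k.
Hypothesis zs : zspec F.
Variable Kl : obj F -> list (obj F).
Hypothesis K1 : forall y, List.NoDup (Kl y).
Hypothesis Kin : forall y, List.In y (Kl y).
Hypothesis K2 : forall y a, ~ List.In a (Kl y) -> ~ homnz a y.
Hypothesis K3 : forall y z, List.In z (Kl y) -> Kl z = Kl y.

Variable M : fmodule F.

Definition PT : lmodType k := dprod (fun x => (M x : lmodType k)).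

Definition piM (f : linfam F PT) : PT := fun y =>
  \sum_(a <- Kl y) \sum_(i < dimh F a y) mact (bas i) (sval f a y (dualb i) a).

Lemma mact0f x y (m : M x) : mact (0 : Defs.hom F x y) m = 0.
Proof. exact: (linear_at0 (mact_linf m)). Qed.

Lemma mact_expand a y (w : Defs.hom F a y) (m : M a) :
  \sum_(i < dimh F a y) (dualb i w : k) *: mact (bas i) m = mact w m.
Proof.
rewrite {2}(bas_expand w) (lin_sum _ _ _ (mact_linf m)).
by apply: eq_bigr => i _; rewrite (linZ (mact_linf m)).
Qed.

Lemma piM_lin : pi_linear piM.
Proof.
move=> al f g; apply: functional_extensionality_dep => y.
rewrite /piM dpE_add dpE_scale scaler_sumr -big_split; apply: eq_bigr => a _.
rewrite scaler_sumr -big_split; apply: eq_bigr => i _ /=.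
by rewrite dpE_add dpE_scale (mact_lin (bas i)).
Qed.

Lemma piM_pt (v : forall a b, Defs.hom F a b) (q : PT) y :
  piM (ptfam v q) y = \sum_(a <- Kl y) mact (v a y) (q a).
Proof.
apply: eq_bigr => a _ /=; rewrite -mact_expand; apply: eq_bigr => i _.
by rewrite dpE_scale (linZ (mact_lin (bas i))).
Qed.

Lemma piM_counit (p : PT) : piM (ptfam (fun a b => at2 (idm F a) a b) p) = p.
Proof.
apply: functional_extensionality_dep => y; rewrite piM_pt.
rewrite (@sum_single _ _ _ _ y) //.
- by rewrite at2_eq mact_id.
- by move=> a na; rewrite (at2_neqR (idm F a) _ na) mact0f.
Qed.

Lemma piM_assoc (B : bifam F PT) : piM (assoc_lhs piM_lin B) = piM (assoc_rhs B).
Proof.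
apply: functional_extensionality_dep => y.
pose T b z := \sum_(i < dimh F z y) \sum_(j < dimh F b z)
   mact (bas i) (mact (bas j) (sval B b z z y (dualb j) (dualb i) b)).
have eL : piM (assoc_lhs piM_lin B) y = \sum_(z <- Kl y) \sum_(b <- Kl y) T b z.
  rewrite /piM /=; apply: eq_sum_in => z hz; rewrite -(K3 hz) /T.
  rewrite exchange_big /=; apply: eq_bigr => i _.
  rewrite (lin_sum _ _ _ (mact_lin (bas i))); apply: eq_bigr => b _.
  by rewrite (lin_sum _ _ _ (mact_lin (bas i))).
have eR : piM (assoc_rhs B) y = \sum_(b <- Kl y) \sum_(z <- zlist b y) T b z.
  rewrite /piM /=; apply: eq_bigr => b _.
  under eq_bigr do rewrite /fmu dpE_sum (lin_sum _ _ _ (mact_lin _)).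
  rewrite exchange_big /=; apply: eq_bigr => z _.
  under eq_bigr do rewrite dpE_sum (lin_sum _ _ _ (mact_lin _)).
  rewrite exchange_big /= [RHS]exchange_big /=; apply: eq_bigr => j _.
  under eq_bigr do rewrite dpE_sum (lin_sum _ _ _ (mact_lin _)).
  rewrite exchange_big /=; apply: eq_bigr => i _.
  under eq_bigr do rewrite dpE_scale (linZ (mact_lin _)).
  by rewrite mact_expand mact_comp.
rewrite eL eR exchange_big /=; apply: eq_sum_in => b hb.
symmetry; apply: sum_same => //; first exact: (proj1 (zs b y)).
- move=> z hz; have [_ hzy] := proj1 ((proj2 (zs b y)) z) hz; apply: NNPP => nin; exact: K2 nin hzy.
- move=> z _ nin.
  have nn : ~ (homnz b z /\ homnz z y) by move=> hh; apply: nin; exact: proj2 ((proj2 (zs b y)) z) hh.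
  rewrite /T; apply: big1 => i _; apply: big1 => j _.
  case: (classic (homnz b z)) => hbz.
    have hzy : ~ homnz z y by move=> hzy; apply: nn.
    by rewrite (nhomnz hzy (bas i)) mact0f.
  by rewrite (nhomnz hbz (bas j)) mact0f (linear_at0 (mact_lin _)).
Qed.

Definition PC : contramod F := Contra piM_counit piM_assoc.


Definition phiM (x : obj F) (p : PC) : M x := (p : PT) x.

Lemma eactM_at x (q : PC) : phiM x (eact x q) = phiM x q.
Proof.
rewrite /phiM /eact /dact /= piM_pt (@sum_single _ _ _ _ x) //.
- by rewrite at2_eq mact_id.
- by move=> a na; rewrite (at2_neqL (idm F x) _ (not_eq_sym na)) mact0f.
Qed.

Lemma eactM_off x (q : PC) y : y <> x -> phiM y (eact x q) = 0.
Proof.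
move=> ny; rewrite /phiM /eact /dact /= piM_pt big1 // => a _.
by rewrite (at2_neqR (idm F x) _ (not_eq_sym ny)) mact0f.
Qed.

Definition dl (x : obj F) (m : M x) : PT := fun y =>
  match excluded_middle_informative (x = y) with
  | left e => eq_rect x (fun z => (M z : lmodType k)) m y e
  | right _ => 0
  end.

Lemma iso_PC : Theta_iso (P := PC) (M := M) phiM.
Proof.
split.
- by [].
- move=> x p1 p2 [q1 ->] [q2 ->] e.
  apply: functional_extensionality_dep => y.
  case: (classic (y = x)) => [->|ny]; first exact: e.
  by have := eactM_off q1 ny; have := eactM_off q2 ny; rewrite /phiM => -> ->.
- move=> x m.
  have dlx : dl m x = m.
    rewrite /dl; case: excluded_middle_informative => // e.
    by rewrite (proof_irrelevance _ e erefl).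
  have dly : forall y, y <> x -> dl m y = 0.
    by move=> y ny; rewrite /dl; case: excluded_middle_informative => // e; case: ny.
  exists (dl m : PC); last exact: dlx.
  exists (dl m : PC); apply: functional_extensionality_dep => y.
  case: (classic (y = x)) => [->|ny].
    by have := eactM_at x (dl m : PC); rewrite /phiM => ->.
  by have := eactM_off (dl m : PC) ny; rewrite /phiM => ->; rewrite dly.
- move=> x y f p [q ->].
  rewrite /phiM /evact /dact /= piM_pt (@sum_single _ _ _ _ x) //.
  + by rewrite at2_eq -/(phiM x _) eactM_at.
  + move=> a na; rewrite (at2_neqL f _ (not_eq_sym na)) mact0f //.
  + move=> nin; have hn := K2 nin.
    by rewrite (nhomnz hn (at2 f x y)) mact0f.
Qed.

End Ess.

Lemma fin_sub (T : Type) (Q : T -> Prop) (s : list T) :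
  (forall z, Q z -> List.In z s) -> exists l, List.NoDup l /\ forall z, List.In z l <-> Q z.
Proof.
move=> h.
pose dec := fun a b : T => excluded_middle_informative (a = b).
pose qb := fun z => if excluded_middle_informative (Q z) then true else false.
exists (List.nodup dec (List.filter qb s)); split; first exact: List.NoDup_nodup.
move=> z; rewrite List.nodup_In List.filter_In /qb.
case: (excluded_middle_informative (Q z)) => hz; split.
- by move=> _.
- by move=> _; split => //; apply: h.
- by case.
- by move=> q; exfalso; exact: hz q.
Qed.

Section Short.
Variable k : fieldType.
Variable E : linCat k.
Hypothesis lf : locally_finite E.

Lemma short_nz_E (x y : obj E) : homnz (F := short E) x y -> homnz (F := E) x y.
Proof.
case=> u nu; exists (vsval u) => e; apply: nu; apply: short_valK.
by rewrite e linear0.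
Qed.

Lemma short_nz_sim (x y : obj E) : homnz (F := short E) x y -> simeq (F:=E) x y.
Proof.
case=> u nu; apply: NNPP => ns; apply: nu; apply: short_valK.
by rewrite (short_hom0 u ns) linear0.
Qed.

Lemma zs_short : zspec (short E).
Proof.
move=> x y.
have ex : exists s, List.NoDup s /\ forall z, List.In z s <-> homnz (F := short E) x z /\ homnz (F := short E) z y.
  have [s hs] := lf x y.
  apply: fin_sub => z [h1 h2]; apply: hs; apply: preceq1; exact: short_nz_E.
exact: (epsilon_spec (inhabits nil) _ ex).
Qed.

Definition Kl (y : obj E) : list (obj E) :=
  epsilon (inhabits nil) (fun l => List.NoDup l /\ forall a, List.In a l <-> simeq (F:=E) a y).

Lemma Kl_spec y : List.NoDup (Kl y) /\ forall a, List.In a (Kl y) <-> simeq (F:=E) a y.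
Proof.
have ex : exists l, List.NoDup l /\ forall a, List.In a l <-> simeq (F:=E) a y.
  have [s hs] := lf y y.
  apply: fin_sub => z [h1 h2]; exact: hs.
exact: (epsilon_spec (inhabits nil) _ ex).
Qed.

Lemma K1 y : List.NoDup (Kl y).
Proof. exact: (proj1 (Kl_spec y)). Qed.

Lemma Kin y : List.In y (Kl y).
Proof. apply/(proj2 (Kl_spec y)); exact: simeq_refl. Qed.

Lemma K2 (y a : obj E) : ~ List.In a (Kl y) -> ~ homnz (F := short E) a y.
Proof. by move=> nin h; apply: nin; apply/(proj2 (Kl_spec y)); exact: short_nz_sim. Qed.

Lemma K3 (y z : obj E) : List.In z (Kl y) -> Kl z = Kl y.
Proof.
move=> /(proj2 (Kl_spec y)) hzy; rewrite /Kl; congr epsilon.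
apply: functional_extensionality => l; apply: propositional_extensionality.
have hs : forall a, simeq (F:=E) a z <-> simeq (F:=E) a y.
  move=> a; split => h; first exact: simeq_trans h hzy.
  by apply: simeq_trans h _; case: hzy.
split=> [[n h]|[n h]]; split=> // a; rewrite h; [exact: hs|split; apply hs].
Qed.

End Short.

Theorem lemma3p5 (k : fieldType) (E : linCat k) :
  locally_finite E ->
  [/\ (forall (P Q : contramod (short E)) (g1 g2 : contra_hom P Q),
         (forall x (p : P), inTheta x p -> g1 p = g2 p) ->
         forall p : P, g1 p = g2 p),
      (forall (P Q : contramod (short E)) (eta : forall x : obj (short E), P -> Q),
         Theta_hom eta ->
         exists g : contra_hom P Q,
           forall x (p : P), inTheta x p -> g p = eta x p)
    & (forall M : fmodule (short E),
         exists (P : contramod (short E)) (phi : forall x : obj (short E), P -> M x),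
           Theta_iso phi)].
Proof.
move=> lf.
have zs := zs_short lf.
split.
- exact: (part1 zs).
- move=> P Q eta [hA hB hC].
  have Ks : forall x : obj (short E), exists l, List.NoDup l /\ forall a, ~ List.In a l -> ~ homnz a x.
    by move=> x; exists (Kl (E:=E) x); split; [exact: (K1 lf)|exact: (K2 lf)].
  exists (gh zs hA hB hC Ks) => x p hp.
  exact: (gf_theta zs hA hB hp).
- move=> M.
  exists (PC zs (K1 lf) (Kin lf) (K2 lf) (K3 lf) M).
  eexists.
  exact: iso_PC.
Qed.
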